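(* Let $Q>0$ and $\Gamma>0$. Let $f$ be a nonnegative random variable with a continuous probability density function, and let $I$ be a nonnegative random variable independent of $f$ with $\mathbb{E}[I]=\Gamma$. Define $$C^{{\rm ER},a}_{\rm PR,CP}=\mathbb{E}\left[\log\left(1+\frac{fQ}{1+I}\right)\right],\qquad C^{{\rm ER},p}_{\rm PR,CP}=\mathbb{E}\left[\log\left(1+\frac{fQ}{1+\Gamma}\right)\right].$$ Then $C^{{\rm ER},a}_{\rm PR,CP}\geq C^{{\rm ER},p}_{\rm PR,CP}$.
   Context: Setting: a primary radio (PR) fading link with channel power gain $f$ and unit-power Gaussian noise, sharing spectrum with a cognitive radio (CR) whose interference power at the PR receiver is $I$. The CR is independent of $f$; $I$ is, e.g., $I=gp$ where $g$ is the CR-to-PR channel power gain and $p$ is the CR transmit power, which depends only on CR-side channel gains independent of $f$. Under the average-interference-power (AIP) constraint with threshold $\Gamma$, the interference is random with $\mathbb{E}[I]=\Gamma$. Under the peak-interference-power (PIP) constraint with threshold $\Gamma$, the interference equals $\Gamma$ in every fading state. The PR uses the constant-power (CP) policy: it transmits with power $Q$ in every fading state, treating interference as Gaussian noise. $C^{{\rm ER},a}_{\rm PR,CP}$ and $C^{{\rm ER},p}_{\rm PR,CP}$ are the resulting PR ergodic capacities in the AIP and PIP cases. *)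

(* Defs.v *)
From HB Require Import structures.
From mathcomp Require Import all_boot all_order all_algebra.
From mathcomp Require Import all_classical all_reals all_analysis.
Set Implicit Arguments. Unset Strict Implicit. Unset Printing Implicit Defensive.
Import Order.TTheory GRing.Theory Num.Theory.
Import numFieldNormedType.Exports.
Local Open Scope classical_set_scope.
Local Open Scope ring_scope.
Local Open Scope ereal_scope.

Definition indep_rv {d} {T : measurableType d} {R : realType}
  (P : probability T R) (X Y : {RV P >-> R}) : Prop :=
  forall A B : set R, measurable A -> measurable B ->
    P (X @^-1` A `&` Y @^-1` B) = P (X @^-1` A) * P (Y @^-1` B).

Definition has_continuous_pdf {d} {T : measurableType d} {R : realType}
  (P : probability T R) (X : {RV P >-> R}) : Prop :=
  exists g : R -> R, continuous g /\ (forall x, (0 <= g x)%R) /\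
    forall A : set R, measurable A ->
      P (X @^-1` A) = (\int[lebesgue_measure]_(x in A) (g x)%:E).

(* Main.v *)
Require Import Defs.
From HB Require Import structures.
From mathcomp Require Import all_boot all_order all_algebra.
From mathcomp Require Import all_classical all_reals all_analysis.
From mathcomp Require Import measurable_realfun.
From mathcomp Require Import ring lra.
Import Order.TTheory GRing.Theory Num.Theory.
Import numFieldNormedType.Exports.
Local Open Scope classical_set_scope.
Local Open Scope ring_scope.

Lemma indep_mul (d : measure_display) (T : measurableType d) (R : realType)
  (P : probability T R) (f I : {RV P >-> R}) (phi psi : R -> R) :
  measurable_fun setT phi -> measurable_fun setT psi ->
  (forall x, 0 <= phi x) -> (forall x, 0 <= psi x) ->
  indep_rv f I ->
  (\int[P]_w (phi (f w) * psi (I w))%:E =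
    \int[P]_w (phi (f w))%:E * \int[P]_w (psi (I w))%:E)%E.
Proof.
move=> mphi mpsi phi0 psi0 ind.
pose F := fun w => (f w, I w).
have mF : measurable_fun setT F by apply: measurable_fun_pair.
pose g := fun z : R * R => (phi z.1 * psi z.2)%:E.
have mg : measurable_fun [set: (R * R)%type] g.
  apply/measurable_EFinP; apply: measurable_funM.
    exact: measurableT_comp mphi measurable_fst.
  exact: measurableT_comp mpsi measurable_snd.
have g0 : forall z, (0 <= g z)%E by move=> z; rewrite lee_fin mulr_ge0.
pose mu1 := distribution P f. pose mu2 := distribution P I.
pose Fm : {mfun T >-> (R * R)%type} := HB.pack F (isMeasurableFun.Build _ _ _ _ F mF).
have -> : (\int[P]_w (phi (f w) * psi (I w))%:E = \int[distribution P Fm]_z g z)%E.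
  by rewrite ge0_integral_distribution.
have -> : (\int[distribution P Fm]_z g z = \int[(mu1 \x mu2)%E]_z g z)%E.
  apply: (eq_measure_integral ((mu1 \x mu2)%E)) => A mA _.
  apply/esym; apply: (@product_measure_unique _ _ _ _ _ mu1 mu2 (distribution P Fm)) => // B C mB mC.

rewrite fubini_tonelli1//.
rewrite /fubini_F /g /=.
under eq_integral => x _.
  rewrite (_ : (fun y => (phi x * psi y)%:E) = (fun y => (phi x)%:E * (psi y)%:E)%E); last first.
    by apply/funext => y.
  rewrite ge0_integralZl//; first over.
  - exact/measurable_EFinP.
  - by move=> y _; rewrite lee_fin.
  - by rewrite lee_fin.
rewrite ge0_integralZr//; last 3 first.
  - exact/measurable_EFinP.
  - by move=> y _; rewrite lee_fin.
  - by apply: integral_ge0 => y _; rewrite lee_fin.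
rewrite /mu1 /mu2 !ge0_integral_distribution//.
all: try (by move=> y; rewrite lee_fin).
all: try exact/measurable_EFinP.
Qed.

Lemma key_ineq (R : realType) (a i G : R) : 0 <= a -> 0 <= i -> 0 < G ->
  ln (1 + a / (1 + G)) + a / ((1 + G) * (1 + G + a)) * G <=
  ln (1 + a / (1 + i)) + a / ((1 + G) * (1 + G + a)) * i.
Proof.
move=> a0 i0 G0.
set u := 1 + i; set v := 1 + G.
have u0 : 0 < u by rewrite /u; lra.
have v0 : 0 < v by rewrite /v; lra.
set p := 1 + a / u; set q := 1 + a / v.
have p0 : 0 < p by rewrite /p; have := divr_ge0 a0 (ltW u0); lra.
have q0 : 0 < q by rewrite /q; have := divr_ge0 a0 (ltW v0); lra.
have H1 : ln (q / p) <= q / p - 1.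
  have := @le_ln1Dx R (q / p - 1).
  have -> : 1 + (q / p - 1) = q / p by ring.
  apply.
  have := divr_gt0 q0 p0; lra.
rewrite ln_div ?posrE // in H1.
suff : a / (v * (v + a)) * G - a / (v * (v + a)) * i <= 1 - q / p by lra.
have -> : a / (v * (v + a)) * G - a / (v * (v + a)) * i = a * (v - u) / (v * (v + a)).
  rewrite /u /v; field; rewrite /v; apply/andP; split; lra.
have -> : 1 - q / p = a * (v - u) / (v * (u + a)).
  rewrite /p /q; field; rewrite /u /v; lra.
rewrite -subr_ge0.
have -> : a * (v - u) / (v * (u + a)) - a * (v - u) / (v * (v + a)) =
  a * (v - u) ^+ 2 / (v * (u + a) * (v + a)).
  field; apply/and3P; split; lra.
apply: divr_ge0; first by apply: mulr_ge0 => //; exact: sqr_ge0.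
apply: mulr_ge0; [apply: mulr_ge0|]; lra.
Qed.

Lemma mV (R : realType) (s : R -> R) : continuous s -> (forall x, s x != 0) ->
  measurable_fun setT (fun x => (s x)^-1).
Proof.
move=> cs s0; apply: continuous_measurable_fun => x.
exact: (@continuousV R R s x (s0 x) (cs x)).
Qed.

Lemma norm_cont (R : realType) : continuous (fun x : R => `|x|).
Proof. exact: (@norm_continuous _ R^o). Qed.

Ltac side := first [ by move=> ? _; rewrite lee_fin
  | by move=> ? _; rewrite lee_fin; apply: mulr_ge0 => //; exact: ltW
  | exact/measurable_EFinP
  | (apply/measurable_EFinP; apply: measurable_funM => //;
      first [exact: measurable_cst | exact: measurableT_comp]) ].

Theorem theorem4p1 (d : measure_display) (T : measurableType d) (R : realType)
  (P : probability T R) (f I : {RV P >-> R}) (Q Gamma : R) :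
  0 < Q -> 0 < Gamma ->
  (forall w, 0 <= f w) -> (forall w, 0 <= I w) ->
  has_continuous_pdf f ->
  indep_rv f I ->
  (\int[P]_w (I w)%:E = Gamma%:E)%E ->
  (\int[P]_w (ln (1 + f w * Q / (1 + Gamma)))%:E
     <= \int[P]_w (ln (1 + f w * Q / (1 + I w)))%:E)%E.
Proof.
move=> Q0 G0 f0 I0 _ ind EI.
set v := 1 + Gamma.
have v0 : 0 < v by rewrite /v; lra.
pose cf := fun x : R => `|x| * Q * (v * (v + `|x| * Q))^-1.
have mf : measurable_fun setT f := measurable_funPT f.
have mI : measurable_fun setT I := measurable_funPT I.
have mnorm : measurable_fun [set: R] (fun x : R => `|x|) by exact: normr_measurable.
have mcf : measurable_fun setT cf.
  apply: measurable_funM; first by apply: measurable_funM => //; exact: measurable_cst.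
  apply: mV.
    move=> x.
    apply: (@continuousM R R (fun _ => v) (fun x => v + `|x| * Q) x); first exact: cst_continuous.
    apply: (@continuousD R R^o R (fun _ => v) (fun x => `|x| * Q) x); first exact: cst_continuous.
    apply: (@continuousM R R (fun x => `|x|) (fun _ => Q) x); [exact: norm_cont | exact: cst_continuous].
  move=> x; rewrite mulf_neq0 ?gt_eqF//; have := normr_ge0 x;
    have := mulr_ge0 (normr_ge0 x) (ltW Q0); lra.
have cf0 : forall x, 0 <= cf x.
  move=> x; rewrite /cf; apply: mulr_ge0; first by apply: mulr_ge0 => //; exact: ltW.
  rewrite invr_ge0; apply: mulr_ge0; first lra.
  have := mulr_ge0 (normr_ge0 x) (ltW Q0); lra.
have cf1 : forall x, cf x <= 1.
  move=> x; rewrite /cf; set t := `|x| * Q.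
  have t0 : 0 <= t by apply: mulr_ge0 => //; exact: ltW.
  rewrite ler_pdivrMr; last by apply: mulr_gt0 => //; lra.
  rewrite mul1r; have v1 : 0 <= v - 1 by rewrite /v; lra.
  have := mulr_ge0 v1 t0; have := mulr_gt0 v0 v0; nra.
pose kI := fun y : R => (1 + `|y|)^-1.
have mkI : measurable_fun setT kI.
  apply: mV.
    move=> x.
    apply: (@continuousD R R^o R (fun _ => 1) (fun x => `|x|) x); first exact: cst_continuous.
    exact: norm_cont.
  by move=> x; rewrite gt_eqF//; have := normr_ge0 x; lra.
have Heq : (fun w => ln (1 + f w * Q / (1 + I w))) =
    (fun w => ln (1 + f w * Q * kI (I w))).
  by apply/funext => w; rewrite /kI ger0_norm.
have mH : measurable_fun setT (fun w => ln (1 + f w * Q / (1 + I w))).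
  rewrite Heq; apply: measurableT_comp; first exact: measurable_ln.
  apply: measurable_funD; first exact: measurable_cst.
  apply: measurable_funM; first by apply: measurable_funM => //; exact: measurable_cst.
  exact: measurableT_comp mkI mI.
have mG : measurable_fun setT (fun w => ln (1 + f w * Q / v)).
  apply: measurableT_comp; first exact: measurable_ln.
  apply: measurable_funD; first exact: measurable_cst.
  apply: measurable_funM; last exact: measurable_cst.
  by apply: measurable_funM => //; exact: measurable_cst.
have mC : measurable_fun setT (fun w => cf (f w)) by exact: measurableT_comp mcf mf.
have H0 : forall w, 0 <= ln (1 + f w * Q / (1 + I w)).
  move=> w; apply: ln_ge0; rewrite lerDl; apply: divr_ge0.
    by apply: mulr_ge0 => //; exact: ltW.
  by have := I0 w; lra.
have G0' : forall w, 0 <= ln (1 + f w * Q / v).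
  move=> w; apply: ln_ge0; rewrite lerDl; apply: divr_ge0; last exact: ltW.
  by apply: mulr_ge0 => //; exact: ltW.
have pt : forall w, ln (1 + f w * Q / v) + cf (f w) * Gamma <=
                   ln (1 + f w * Q / (1 + I w)) + cf (f w) * I w.
  move=> w; have := @key_ineq R (f w * Q) (I w) Gamma.
  rewrite /cf ger0_norm //.
  have -> : f w * Q * (v * (v + f w * Q))^-1 = f w * Q / ((1 + Gamma) * (1 + Gamma + f w * Q)) by [].
  apply => //; apply: mulr_ge0 => //; exact: ltW.
Local Open Scope ereal_scope.
have step1 : \int[P]_w ((ln (1 + f w * Q / v))%:E + (cf (f w) * Gamma)%:E) <=
             \int[P]_w ((ln (1 + f w * Q / (1 + I w)))%:E + (cf (f w) * `|I w|)%:E).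
  apply: ge0_le_integral => //.
  - move=> w _; apply: adde_ge0; rewrite lee_fin //.
    by apply: mulr_ge0 => //; exact: ltW.
  - apply: emeasurable_funD; apply/measurable_EFinP => //.
    by apply: measurable_funM => //; exact: measurable_cst.
  - apply: emeasurable_funD; apply/measurable_EFinP => //.
    by apply: measurable_funM => //; exact: measurableT_comp mnorm mI.
  - by move=> w _; rewrite -!EFinD lee_fin ger0_norm.
rewrite ge0_integralD //in step1; last 4 first.
  1-4: side.
rewrite ge0_integralD //in step1; last 4 first.
  1-4: side.
rewrite (@indep_mul _ _ _ P f I cf (fun y => `|y|%R) mcf mnorm cf0 (fun y => normr_ge0 y) ind) in step1.
have EnI : \int[P]_w (`|I w|)%:E = Gamma%:E.
  by rewrite -EI; apply: eq_integral => w _; rewrite ger0_norm.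
rewrite EnI in step1.
have HEG : \int[P]_w (cf (f w) * Gamma)%:E = \int[P]_w (cf (f w))%:E * Gamma%:E.
  under eq_integral do rewrite EFinM.
  rewrite ge0_integralZr //.
  all: try exact/measurable_EFinP. all: try (by move=> w _; rewrite lee_fin). by rewrite lee_fin; exact: ltW.
rewrite HEG in step1.
have Cfin : \int[P]_w (cf (f w))%:E * Gamma%:E \is a fin_num.
  rewrite fin_numM // ge0_fin_numE; last by apply: integral_ge0 => w _; rewrite lee_fin.
  apply: (@le_lt_trans _ _ (\int[P]_w (cst 1%E w))); last first.
    have P1 := @probability_setT _ _ _ P. rewrite integral_cst // mul1e. rewrite -[X in X < _]/(P setT) P1. exact: ltry.
  apply: ge0_le_integral => //.
  all: try (by move=> w _; rewrite lee_fin).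
  all: try exact/measurable_EFinP.
  all: try exact: measurable_cst.
by rewrite leeD2rE in step1.
Qed.
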